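(* Let $r_1 \ge 2$ and $x_1 \ge 1$ be integers and $d = x_1 + r_1 - 1$. Let $R = K[z_1,\ldots,z_{r_1+3},y_1,\ldots,y_d]$ over a field $K$ with the lexicographic order $<_{lex}$ given by $z_1 > \cdots > z_{r_1+3} > y_1 > \cdots > y_d$. Let $B$ be the set of pairs $(i,j)\in\mathbb{N}^2$ with $j-i\ge 2$, $1\le i\le r_1$, $j \le r_1+3$, $j\ne r_1+1$, and let $J$ be the monomial ideal of $R$ generated by the monomials $z_iz_j$ for $(i,j)\in B$, $z_{k+1}\prod_{s=1}^{r_1-1}y_s$ for $0\le k\le r_1-1$, $z_{r_1-k}\prod_{s=r_1}^{d}y_s$ for $0\le k\le r_1-1$, $z_{r_1+2}\prod_{s=1}^{r_1-1}y_s$, and $z_{r_1+1}\prod_{s=r_1}^{d}y_s$. Suppose $f = z_1^{\gamma_1}\cdots z_{r_1+3}^{\gamma_{r_1+3}} y_1^{\delta_1}\cdots y_d^{\delta_d}$ is a monomial with $f \notin J$ and $\gamma_i > 0$ for at least one $i$. Let $m$ be the minimal index with $\gamma_m > 0$. Then $|\{i : \gamma_i > 0\}| \le 3$, and moreover: (1) if $1 \le m \le r_1-1$, then $\gamma_i = 0$ for all $i \in \{1,\ldots,r_1+3\}\setminus\{m, m+1, r_1+1\}$; (2) if $m = r_1$, then $\gamma_i = 0$ for all $i \in \{1,\ldots,r_1-1\}\cup\{r_1+3\}$; (3) if $m \in \{r_1+1, r_1+2, r_1+3\}$, then $\gamma_i = 0$ for all $i < m$.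
   Context: The ideal $J$ is the initial ideal, with respect to $<_{lex}$, generated by the leading terms of a specific set of binomials in the toric ideal of the lattice points of the simplex $\mathrm{conv}\{\mathbf{e}_1,\ldots,\mathbf{e}_d,-\mathbf{q}\}$, $\mathbf{q}=(r_1^{x_1},(1+r_1x_1)^{r_1-1})$; only the monomials listed are needed for the statement. *)

(* Defs.v *)
From mathcomp Require Import all_boot.
Set Implicit Arguments. Unset Strict Implicit. Unset Printing Implicit Defensive.

(* A monomial of R = K[z_1..z_{r1+3}, y_1..y_d] is given by its exponent
   vectors (gamma, delta), 1-based: z_i has exponent gamma i (1 <= i <= r1+3),
   y_s has exponent delta s (1 <= s <= d).  Entries outside range are ignored
   for the monomials under consideration (generators have them equal to 0). *)
Definition mon := ((nat -> nat) * (nat -> nat))%type.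

Definition dvdm (a b : mon) : Prop :=
  (forall i, a.1 i <= b.1 i) /\ (forall s, a.2 s <= b.2 s).

Definition ev1 (i : nat) : nat -> nat := fun k => nat_of_bool (k == i).
Definition ev2 (i j : nat) : nat -> nat := fun k => nat_of_bool ((k == i) || (k == j)).
Definition evrange (a b : nat) : nat -> nat := fun s => nat_of_bool (a <= s <= b).
Definition ev0 : nat -> nat := fun _ => 0.

Definition dim_d (r1 x1 : nat) : nat := x1 + r1 - 1.

Definition inB (r1 i j : nat) : bool :=
  [&& 2 <= j - i, i <= j, 1 <= i, i <= r1, j <= r1 + 3 & j != r1 + 1].

Definition J_gen (r1 x1 : nat) (g : mon) : Prop :=
  let d := dim_d r1 x1 in
  (exists i j, inB r1 i j /\ g = (ev2 i j, ev0))
  \/ (exists k, k <= r1 - 1 /\ g = (ev1 k.+1, evrange 1 (r1 - 1)))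
  \/ (exists k, k <= r1 - 1 /\ g = (ev1 (r1 - k), evrange r1 d))
  \/ g = (ev1 (r1 + 2), evrange 1 (r1 - 1))
  \/ g = (ev1 (r1 + 1), evrange r1 d).

Definition inJ (r1 x1 : nat) (f : mon) : Prop :=
  exists g, J_gen r1 x1 g /\ dvdm g f.

(* Main.v *)
Require Import Defs.
From mathcomp Require Import all_boot.
From mathcomp Require Import zify.

Lemma key (r1 x1 : nat) (gamma delta : nat -> nat) i j :
  1 <= i <= r1 -> i + 2 <= j <= r1 + 3 -> j != r1 + 1 ->
  0 < gamma i -> 0 < gamma j -> inJ r1 x1 (gamma, delta).
Proof.
move=> Hi Hj Hjn gi gj.
exists (ev2 i j, ev0); split.
  left; exists i, j; split => //.
  rewrite /inB Hjn; apply/and5P; split; lia.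
split => k /=; rewrite /ev2 /ev0 //.
case: (eqVneq k i) => [->|_] //=.
case: (eqVneq k j) => [->|_] //=.
Qed.

Lemma size3 (s : seq nat) (P : pred nat) a b c :
  uniq s -> (forall i, i \in s -> P i -> i \in [:: a; b; c]) ->
  size [seq i <- s | P i] <= 3.
Proof.
move=> us H.
have -> : 3 = size [:: a; b; c] by [].
apply: uniq_leq_size; first by rewrite filter_uniq.
move=> i; rewrite mem_filter => /andP [Pi si]; exact: H.
Qed.

Theorem lemma3p4 (r1 x1 : nat) (gamma delta : nat -> nat) :
  2 <= r1 -> 1 <= x1 ->
  ~ inJ r1 x1 (gamma, delta) ->
  forall m : nat,
    1 <= m <= r1 + 3 -> 0 < gamma m ->
    (forall i, 1 <= i < m -> gamma i = 0) ->
    size [seq i <- iota 1 (r1 + 3) | 0 < gamma i] <= 3 /\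
    ((1 <= m <= r1 - 1) ->
       forall i, 1 <= i <= r1 + 3 -> i \notin [:: m; m.+1; r1 + 1] -> gamma i = 0) /\
    (m = r1 ->
       forall i, (1 <= i <= r1 - 1) || (i == r1 + 3) -> gamma i = 0) /\
    (r1 + 1 <= m <= r1 + 3 ->
       forall i, 1 <= i < m -> gamma i = 0).
Proof.
move=> hr hx nJ m Hm gm Hlt.
have K : forall i j, 1 <= i <= r1 -> i + 2 <= j <= r1 + 3 -> j != r1 + 1 ->
  0 < gamma i -> 0 < gamma j -> False.
  by move=> i j a b c d e; apply: nJ; exact: (@key r1 x1 gamma delta i j a b c d e).
have Hge : forall i, 1 <= i -> 0 < gamma i -> m <= i.
  move=> i h1 gi; case: (leqP m i) => // lt.
  by rewrite Hlt ?h1 // in gi.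
have P1 : (1 <= m <= r1 - 1) ->
       forall i, 1 <= i <= r1 + 3 -> i \notin [:: m; m.+1; r1 + 1] -> gamma i = 0.
  move=> h i hi; rewrite !inE => /norP [n1 /norP [n2 n3]].
  case: (posnP (gamma i)) => // gi; exfalso.
  have := Hge i ltac:(lia) gi => mi.
  apply: (K m i) => //; lia.
have P2 : m = r1 ->
       forall i, (1 <= i <= r1 - 1) || (i == r1 + 3) -> gamma i = 0.
  move=> h i /orP [hi|/eqP ->]; first by apply: Hlt; lia.
  case: (posnP (gamma (r1 + 3))) => // gi; exfalso.
  apply: (K m (r1 + 3)) => //; lia.
split; last by split=> //; split => // _.
case: (leqP m (r1 - 1)) => hm.
- apply: (@size3 _ _ m m.+1 (r1 + 1)); first exact: iota_uniq.
  move=> i; rewrite mem_iota => hi gi.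
  apply/negPn/negP => nin.
  have := P1 ltac:(lia) i ltac:(lia) nin; lia.
- case: (eqVneq m r1) => hm2.
  + apply: (@size3 _ _ r1 (r1 + 1) (r1 + 2)); first exact: iota_uniq.
    move=> i; rewrite mem_iota => hi gi.
    have := Hge i ltac:(lia) gi => mi.
    have ni : i != r1 + 3.
      apply/eqP => e; move: gi; rewrite P2 // e eqxx orbT //.
    rewrite !inE; move: ni hm2; lia.
  + apply: (@size3 _ _ (r1 + 1) (r1 + 2) (r1 + 3)); first exact: iota_uniq.
    move=> i; rewrite mem_iota => hi gi.
    have := Hge i ltac:(lia) gi => mi.
    rewrite !inE; move: hm hm2; lia.
Qed.
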